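(* Let $N>0$, $\beta>0$, $0<\rho<1$, $\sigma>0$, $\gamma>0$ and $0\le\pi_1\le\pi_2\le 1$ be constants, and let $\Delta_1,\Delta_2:[0,\infty)\to[0,\infty)$ be continuous with $\Delta_i(t)\to0$ as $t\to+\infty$ and $\overline{\Delta}_i:=\int_0^\infty\Delta_i(t)\,dt\le N$ ($i=1,2$). Write $q(t)=\Delta_1(t)\pi_1+\Delta_2(t)(\pi_2-\pi_1)$ and consider $$S'=-\tfrac{\beta}{N}S(1-\rho)I-\tfrac{S}{N}q(t),\quad E'=\tfrac{\beta}{N}S(1-\rho)I-\sigma E,\quad I'=\sigma E-\gamma I,\quad R'=\gamma I,\quad V'=\tfrac{S}{N}q(t),$$ with initial data $S_0>0$, $E_0,I_0,R_0,V_0\ge 0$, $S_0+E_0+I_0+R_0+V_0=N$. Let $(S_\infty,0,0,N-S_\infty-V_\infty,V_\infty)$ be the limit of the solution as $t\to+\infty$. Then $$\frac{\beta(1-\rho)}{\gamma N}S_\infty-\log S_\infty+\frac{\beta(1-\rho)}{\gamma N}V_\infty=\frac{1}{N}\big(\pi_1\overline{\Delta}_1+(\pi_2-\pi_1)\overline{\Delta}_2\big)+\frac{\beta(1-\rho)}{\gamma N}(N-R_0)-\log S_0.$$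
   Context: SEIR epidemic model with vaccination in a population of constant size $N$; $R_0$ denotes the initial value of the removed compartment $R$ (not a reproductive number). The solution converges as $t\to\infty$ to a point of the form $(S_\infty,0,0,N-S_\infty-V_\infty,V_\infty)$. *)

(* Defs.v *)
From Stdlib Require Import Reals.
From Coquelicot Require Import Coquelicot.
Open Scope R_scope.

Definition vacc_rate (pi1 pi2 : R) (D1 D2 : R -> R) (t : R) : R :=
  D1 t * pi1 + D2 t * (pi2 - pi1).

Definition continuous_on_halfline (f : R -> R) : Prop :=
  (forall t, 0 < t -> continuous f t) /\
  filterlim f (at_right 0) (locally (f 0)).

(* Main.v *)
Require Import Defs.
From Stdlib Require Import Reals Lra.
From Coquelicot Require Import Coquelicot.
Open Scope R_scope.

Section L.
Context {T : Type} {F : (T -> Prop) -> Prop} {FF : Filter F}.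
Lemma lplus (f g : T -> R) a b : filterlim f F (locally a) -> filterlim g F (locally b) ->
  filterlim (fun x => f x + g x) F (locally (a + b)).
Proof. intros Hf Hg. exact (filterlim_comp_2 f g Rplus Hf Hg (@filterlim_plus _ R_NormedModule a b)). Qed.
Lemma lmult (f g : T -> R) a b : filterlim f F (locally a) -> filterlim g F (locally b) ->
  filterlim (fun x => f x * g x) F (locally (a * b)).
Proof. intros Hf Hg. exact (filterlim_comp_2 f g Rmult Hf Hg (@filterlim_mult R_AbsRing a b)). Qed.
Lemma lexp (f : T -> R) a : filterlim f F (locally a) -> filterlim (fun x => exp (f x)) F (locally (exp a)).
Proof. intros Hf. eapply filterlim_comp. exact Hf. apply continuous_exp. Qed.
Lemma lconst (a : R) : filterlim (fun _ => a) F (locally a).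
Proof. apply filterlim_const. Qed.

Lemma lshape (s r p : T -> R) s0 r0 p0 c R0 N :
  filterlim s F (locally s0) -> filterlim r F (locally r0) -> filterlim p F (locally p0) ->
  filterlim (fun x => s x * exp (c * (r x - R0) + p x / N)) F
    (locally (s0 * exp (c * (r0 - R0) + p0 / N))).
Proof.
  intros Hs Hr Hp. apply lmult; [exact Hs|]. apply lexp. apply lplus.
  - apply lmult; [apply lconst|]. unfold Rminus. apply lplus; [exact Hr|apply lconst].
  - unfold Rdiv. apply lmult; [exact Hp|apply lconst].
Qed.

Lemma lcomb (f g : T -> R) a b c d : filterlim f F (locally a) -> filterlim g F (locally b) ->
  filterlim (fun x => c * f x + d * g x) F (locally (c * a + d * b)).
Proof.
  intros Hf Hg. apply lplus; apply lmult; try apply lconst; assumption.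
Qed.
End L.

Lemma gen_lim (D : R -> R) L :
  is_RInt_gen D (at_point 0) (Rbar_locally p_infty) L ->
  (forall x, 0 <= x -> ex_RInt D 0 x) /\
  filterlim (RInt D 0) (Rbar_locally p_infty) (locally L).
Proof.
  intros H. split.
  - assert (H1 := H (fun _ => True) (filter_true)).
    destruct H1 as [Q Rr HQ HR Hall].
    destruct HR as [M HM].
    intros x Hx.
    destruct (Hall 0 (Rmax x (M + 1)) HQ (HM _ (Rlt_le_trans _ _ _ (Rlt_plus_1 M) (Rmax_r _ _))))
      as [y [Hy _]].
    refine (@ex_RInt_Chasles_1 R_CompleteNormedModule D 0 x (Rmax x (M + 1)) _ _).
    split; [exact Hx | apply Rmax_l].
    exists y. exact Hy.
  - intros P HP.
    destruct (H P HP) as [Q Rr HQ HR Hall].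
    destruct HR as [M HM]. exists M. intros x Hx.
    destruct (Hall 0 x HQ (HM x Hx)) as [y [Hy Py]].
    simpl in Hy. rewrite (is_RInt_unique _ _ _ _ Hy). exact Py.
Qed.

Lemma rint_deriv (D : R -> R) t :
  (forall x, 0 <= x -> ex_RInt D 0 x) -> 0 < t -> continuous D t ->
  is_derive (RInt D 0) t (D t).
Proof.
  intros Hex Ht Hc. apply (is_derive_RInt D (RInt D 0) 0 t); [|exact Hc].
  exists (mkposreal t Ht). intros y Hy.
  change (Rabs (y - t) < t) in Hy.
  apply (@RInt_correct R_CompleteNormedModule). apply Hex.
  apply Rabs_def2 in Hy. lra.
Qed.

Lemma rint_right0 (D : R -> R) :
  filterlim D (at_right 0) (locally (D 0)) -> (forall x, 0 <= x -> ex_RInt D 0 x) ->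
  filterlim (RInt D 0) (at_right 0) (locally 0).
Proof.
  intros Hc Hex. apply (proj2 (filterlim_locally _ _)). intros eps.
  assert (Hd := proj1 (filterlim_locally _ _) Hc (mkposreal 1 Rlt_0_1)).
  destruct Hd as [d Hd].
  set (K := Rabs (D 0) + 2).
  assert (HK : 0 < K) by (unfold K; pose proof (Rabs_pos (D 0)); lra).
  assert (Hm : 0 < Rmin d (eps / K)).
  { apply Rmin_pos. apply cond_pos. apply Rdiv_lt_0_compat. apply cond_pos. exact HK. }
  exists (mkposreal _ Hm). intros y Hy Hy0.
  change (Rabs (y - 0) < Rmin d (eps / K)) in Hy.
  change (Rabs (RInt D 0 y - 0) < eps).
  rewrite Rminus_0_r in *. rewrite Rabs_pos_eq in Hy by lra.
  assert (Hb : Rabs (RInt D 0 y) <= (y - 0) * (Rabs (D 0) + 1)).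
  { apply abs_RInt_le_const. lra. apply Hex; lra.
    intros t [Ht0 Hty]. destruct (Rle_lt_or_eq_dec 0 t Ht0) as [Hlt|Heq].
    - assert (Hb1 : ball 0 d t).
      { change (Rabs (t - 0) < d). rewrite Rminus_0_r, Rabs_pos_eq by lra.
        pose proof (Rmin_l d (eps / K)). lra. }
      specialize (Hd t Hb1 Hlt). change (Rabs (D t - D 0) < 1) in Hd.
      pose proof (Rabs_triang_inv (D t) (D 0)). lra.
    - subst t. lra. }
  assert (Hy2 : y < eps / K) by (pose proof (Rmin_r d (eps / K)); lra).
  assert (y * K < eps).
  { apply Rmult_lt_compat_r with (r := K) in Hy2; [|exact HK].
    unfold Rdiv in Hy2. rewrite Rmult_assoc, Rinv_l in Hy2 by lra. lra. }
  unfold K in *. pose proof (Rabs_pos (D 0)). nra.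
Qed.

Lemma dreplace (f : R -> R) (x l l' : R) : is_derive f x l -> l = l' -> is_derive f x l'.
Proof. intros H ->. exact H. Qed.
Lemma dplus (f g : R -> R) x a b : is_derive f x a -> is_derive g x b ->
  is_derive (fun y => f y + g y) x (a + b).
Proof. intros Ha Hb. exact (@is_derive_plus R_AbsRing R_NormedModule f g x a b Ha Hb). Qed.
Lemma dsubc (f : R -> R) x a c : is_derive f x a -> is_derive (fun y => f y - c) x a.
Proof.
  intros Ha. pose proof (dplus f (fun _ => - c) x a 0 Ha (@is_derive_const R_AbsRing R_NormedModule (- c) x)) as H.
  rewrite Rplus_0_r in H. exact H.
Qed.
Lemma dscal (f : R -> R) x k a : is_derive f x a -> is_derive (fun y => k * f y) x (k * a).
Proof. apply is_derive_scal. Qed.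
Lemma ddivc (f : R -> R) x a N : is_derive f x a -> is_derive (fun y => f y / N) x (a / N).
Proof.
  intros Ha. replace (a / N) with (/ N * a) by (unfold Rdiv; ring).
  apply (is_derive_ext (fun y => / N * f y)).
  intros t; change (/ N * f t = f t / N); unfold Rdiv; ring. apply dscal, Ha.
Qed.
Lemma dmult (f g : R -> R) x a b : is_derive f x a -> is_derive g x b ->
  is_derive (fun y => f y * g y) x (a * g x + f x * b).
Proof.
  intros Ha Hb. exact (@is_derive_mult R_AbsRing f g x a b Ha Hb Rmult_comm).
Qed.
Lemma dexp (g : R -> R) x a : is_derive g x a -> is_derive (fun y => exp (g y)) x (exp (g x) * a).
Proof.
  intros Ha. eapply dreplace.
  exact (@is_derive_comp R_AbsRing R_NormedModule exp g x (exp (g x)) a (is_derive_exp (g x)) Ha).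
  simpl. change (a * exp (g x) = exp (g x) * a). ring.
Qed.

Theorem mainTheorem3
  (N beta rho sigma gamma pi1 pi2 : R)
  (D1 D2 : R -> R) (D1bar D2bar : R)
  (S E I Rm V : R -> R)
  (S0 E0 I0 R0 V0 Sinf Vinf : R) :
  0 < N -> 0 < beta -> 0 < rho < 1 -> 0 < sigma -> 0 < gamma ->
  0 <= pi1 -> pi1 <= pi2 -> pi2 <= 1 ->
  (* the Delta_i : [0,oo) -> [0,oo), continuous, vanishing at infinity,
     with integral over [0,oo) equal to Delta_i-bar <= N *)
  continuous_on_halfline D1 -> continuous_on_halfline D2 ->
  (forall t, 0 <= t -> 0 <= D1 t) -> (forall t, 0 <= t -> 0 <= D2 t) ->
  is_lim D1 p_infty 0 -> is_lim D2 p_infty 0 ->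
  is_RInt_gen D1 (at_point 0) (Rbar_locally p_infty) D1bar ->
  is_RInt_gen D2 (at_point 0) (Rbar_locally p_infty) D2bar ->
  D1bar <= N -> D2bar <= N ->
  (* initial data *)
  0 < S0 -> 0 <= E0 -> 0 <= I0 -> 0 <= R0 -> 0 <= V0 ->
  S0 + E0 + I0 + R0 + V0 = N ->
  S 0 = S0 -> E 0 = E0 -> I 0 = I0 -> Rm 0 = R0 -> V 0 = V0 ->
  (* (S,E,I,R,V) solves the SEIR system with vaccination on [0,oo) *)
  continuous_on_halfline S -> continuous_on_halfline E ->
  continuous_on_halfline I -> continuous_on_halfline Rm ->
  continuous_on_halfline V ->
  (forall t, 0 < t ->
     is_derive S t (- (beta / N) * S t * (1 - rho) * I t
                    - S t / N * vacc_rate pi1 pi2 D1 D2 t)) ->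
  (forall t, 0 < t ->
     is_derive E t ((beta / N) * S t * (1 - rho) * I t - sigma * E t)) ->
  (forall t, 0 < t -> is_derive I t (sigma * E t - gamma * I t)) ->
  (forall t, 0 < t -> is_derive Rm t (gamma * I t)) ->
  (forall t, 0 < t -> is_derive V t (S t / N * vacc_rate pi1 pi2 D1 D2 t)) ->
  (* the solution converges to (Sinf, 0, 0, N - Sinf - Vinf, Vinf) *)
  is_lim S p_infty Sinf -> is_lim E p_infty 0 -> is_lim I p_infty 0 ->
  is_lim Rm p_infty (N - Sinf - Vinf) -> is_lim V p_infty Vinf ->
  beta * (1 - rho) / (gamma * N) * Sinf - ln Sinf
    + beta * (1 - rho) / (gamma * N) * Vinf
  = / N * (pi1 * D1bar + (pi2 - pi1) * D2bar)
    + beta * (1 - rho) / (gamma * N) * (N - R0) - ln S0.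
Proof.
  intros HN Hbeta Hrho Hsig Hgam Hp1 Hp12 Hp2 HcD1 HcD2 HD1p HD2p HlD1 HlD2 HgD1 HgD2
    HD1N HD2N HS0 HE0 HI0 HR0 HV0 Hsum HSi HEi HIi HRi HVi HcS HcE HcI HcR HcV
    HdS HdE HdI HdR HdV HlS HlE HlI HlR HlV.
  destruct (gen_lim D1 D1bar HgD1) as [ex1 lim1].
  destruct (gen_lim D2 D2bar HgD2) as [ex2 lim2].
  set (b := beta * (1 - rho) / (gamma * N)).
  set (P := fun t => pi1 * RInt D1 0 t + (pi2 - pi1) * RInt D2 0 t).
  set (G := fun t => b * (Rm t - R0) + P t / N).
  set (Fn := fun t => S t * exp (b * (Rm t - R0) + P t / N)).
  assert (HdP : forall t, 0 < t -> is_derive P t (vacc_rate pi1 pi2 D1 D2 t)).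
  { intros t Ht. eapply dreplace.
    exact (dplus _ _ t _ _ (dscal _ t pi1 _ (rint_deriv D1 t ex1 Ht (proj1 HcD1 t Ht)))
                           (dscal _ t (pi2 - pi1) _ (rint_deriv D2 t ex2 Ht (proj1 HcD2 t Ht)))).
    unfold vacc_rate; ring. }
  assert (HdG : forall t, 0 < t ->
    is_derive G t (b * (gamma * I t) + vacc_rate pi1 pi2 D1 D2 t / N)).
  { intros t Ht.
    exact (dplus _ _ t _ _ (dscal _ t b _ (dsubc Rm t _ R0 (HdR t Ht))) (ddivc P t _ N (HdP t Ht))). }
  assert (HdF : forall t, 0 < t -> is_derive Fn t 0).
  { intros t Ht. eapply dreplace.
    exact (dmult S (fun y => exp (G y)) t _ _ (HdS t Ht) (dexp G t _ (HdG t Ht))).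
    unfold b. field. lra. }
  assert (Hconst : forall s t, 0 < s -> s < t -> Fn t = Fn s).
  { intros s t Hs Hst.
    destruct (MVT_gen Fn s t (fun _ => 0)) as [c [_ Hc]].
    - intros x Hx. rewrite Rmin_left, Rmax_right in Hx by lra. apply HdF. lra.
    - intros x Hx. rewrite Rmin_left, Rmax_right in Hx by lra.
      apply continuity_pt_filterlim. apply (@ex_derive_continuous R_AbsRing R_NormedModule Fn x).
      exists 0. apply HdF. lra.
    - lra. }
  assert (HF0 : filterlim Fn (at_right 0) (locally S0)).
  { assert (HPr : filterlim P (at_right 0) (locally (pi1 * 0 + (pi2 - pi1) * 0))).
    { apply lcomb; apply rint_right0; try assumption.
      apply (proj2 HcD1). apply (proj2 HcD2). }
    assert (Hl : filterlim Fn (at_right 0)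
       (locally (S0 * exp (b * (R0 - R0) + (pi1 * 0 + (pi2 - pi1) * 0) / N)))).
    { apply lshape.
      - rewrite <- HSi. apply (proj2 HcS).
      - rewrite <- HRi. apply (proj2 HcR).
      - exact HPr. }
    replace (b * (R0 - R0) + (pi1 * 0 + (pi2 - pi1) * 0) / N) with 0 in Hl by (field; lra).
    rewrite exp_0, Rmult_1_r in Hl. exact Hl. }
  assert (HFt : forall t, 0 < t -> Fn t = S0).
  { intros t Ht.
    apply (filterlim_locally_unique (F := at_right 0) Fn); [|exact HF0].
    apply (filterlim_ext_loc (fun _ => Fn t)); [|apply filterlim_const].
    exists (mkposreal t Ht). intros y Hy Hy0.
    change (Rabs (y - 0) < t) in Hy. rewrite Rminus_0_r, Rabs_pos_eq in Hy by lra.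
    apply Hconst; lra. }
  set (Q := pi1 * D1bar + (pi2 - pi1) * D2bar).
  assert (HPi : filterlim P (Rbar_locally p_infty) (locally Q)).
  { apply lcomb; assumption. }
  assert (HFi : filterlim Fn (Rbar_locally p_infty)
            (locally (Sinf * exp (b * ((N - Sinf - Vinf) - R0) + Q / N)))).
  { apply lshape. exact HlS. exact HlR. exact HPi. }
  assert (Heq : Sinf * exp (b * ((N - Sinf - Vinf) - R0) + Q / N) = S0).
  { apply (filterlim_locally_unique (F := Rbar_locally p_infty) Fn); [exact HFi|].
    apply (filterlim_ext_loc (fun _ => S0)); [|apply filterlim_const].
    exists 0. intros x Hx. symmetry. apply HFt. exact Hx. }
  set (Gi := b * ((N - Sinf - Vinf) - R0) + Q / N) in *.
  assert (HSp : 0 < Sinf).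
  { pose proof (exp_pos Gi). destruct (Rlt_le_dec 0 Sinf) as [h|h]; [exact h|].
    nra. }
  assert (Hln : ln S0 = ln Sinf + Gi).
  { rewrite <- Heq, ln_mult, ln_exp. reflexivity. exact HSp. apply exp_pos. }
  assert (Hln2 : ln Sinf = ln S0 - Gi) by lra.
  rewrite Hln2. unfold Gi, Q. field. lra.
Qed.
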